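(* Consider the binary sequential learning model with heterogeneous privacy budgets described in the context, with signal accuracy $p\in(1/2,1)$. Let $\alpha=(1-p)/p$, $\bar u=\mathbb{E}_{\varepsilon_n}\!\left[\frac{1}{1+e^{\varepsilon_n}}\right]$, and for each integer $k\ge 2$ let $$\tilde v_k=\frac{1-\alpha^{\frac{k-2}{k-1}}}{1-\alpha^{\frac{k-2}{k-1}}+\alpha^{\frac{-1}{k-1}}-\alpha}.$$ Suppose each agent $n$ adopts the randomized response strategy with flip probability $u_n(\varepsilon_n)=\frac{1}{1+e^{\varepsilon_n}}$. Then for $\bar u\in[\tilde v_k,\tilde v_{k+1})$, the information cascade threshold $k$ remains unchanged, and the probability of a correct cascade decreases with the expected flipping probability $\bar u$.
   Context: Binary model: unknown state $\theta\in\{-1,+1\}$ with uniform prior; agents $n=1,2,\dots$ act in sequence; agent $n$ privately observes $s_n\in\{-1,+1\}$, i.i.d. given $\theta$ with $\mathbb{P}(s_n=\theta\mid\theta)=p$. Each agent $n$ has a privacy budget $\varepsilon_n$ drawn independently from a distribution for which $\bar u=\mathbb{E}[1/(1+e^{\varepsilon_n})]$ exists. Before a cascade, agent $n$'s intended action equals her signal and she reports $x_n=a_n$ with probability $1-u_n$ and $x_n=-a_n$ with probability $u_n=1/(1+e^{\varepsilon_n})$. Agents interpret the public history using the expected flip probability $\bar u$: if there are $k$ more $+1$ reports than $-1$ reports, the public log-likelihood ratio is $k\log\frac{\bar u(1-p)+p(1-\bar u)}{(1-p)(1-\bar u)+\bar u p}$. Let $\bar\rho=\frac{(1-\bar u)(1-p)+\bar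 u p}{\bar u(1-p)+p(1-\bar u)}$. The information cascade threshold is $k=\lfloor\log_{\bar\rho}\frac{1-p}{p}\rfloor+1$. An information cascade starts at the first agent whose history has (number of $+1$ reports) $-$ (number of $-1$ reports) equal to $\pm k$; from then on all agents take and truthfully report the action favored by the history. It is a correct cascade if that action equals $\theta$. *)

(* Defs.v *)
From HB Require Import structures.
From mathcomp Require Import all_boot all_order all_algebra.
From mathcomp Require Import all_classical all_reals all_analysis.
Set Implicit Arguments. Unset Strict Implicit. Unset Printing Implicit Defensive.
Import Order.TTheory GRing.Theory Num.Theory.
Import numFieldNormedType.Exports.
Local Open Scope ring_scope.

Section Model.
Variable R : realType.

Definition flip_prob (eps : R) : R := (1 + expR eps)^-1.

Definition u_bar (P : probability R R) : R :=
  fine (\int[P]_e (flip_prob e)%:E)%E.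

(* Probability (given theta and the budget eps) that a pre-cascade agent's
   report equals theta: signal correct and not flipped, or wrong and flipped. *)
Definition report_correct_given (p eps : R) : R :=
  p * (1 - flip_prob eps) + (1 - p) * flip_prob eps.

(* Marginal probability (budgets drawn i.i.d. from P, independent of signals)
   that a pre-cascade report equals theta. *)
Definition q_report (P : probability R R) (p : R) : R :=
  fine (\int[P]_e (report_correct_given p e)%:E)%E.

Definition rho_bar (p u : R) : R :=
  ((1 - u) * (1 - p) + u * p) / (u * (1 - p) + p * (1 - u)).

Definition cascade_threshold (p u : R) : int :=
  Num.floor (ln ((1 - p) / p) / ln (rho_bar p u)) + 1.

Definition v_tilde (p : R) (k : nat) : R :=
  let a := (1 - p) / p in
  let b := a `^ ((k%:R - 2) / (k%:R - 1)) in
  (1 - b) / (1 - b + a `^ (- (1 / (k%:R - 1))) - a).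

(* Report sequences are written in theta-aligned form: x_i = true iff the
   report of agent i+1 equals theta. *)
Definition diff_after (n : nat) (x : n.-tuple bool) (i : nat) : int :=
  \sum_(j < n | (j < i)%N) (if tnth x j then 1 else -1).

(* The history reaches +k (the theta side) before ever reaching -k,
   i.e. a correct cascade has started by agent n+1. *)
Definition correct_cascade_by (k n : nat) (x : n.-tuple bool) : bool :=
  [exists i : 'I_n.+1,
     (diff_after x i == k%:Z) &&
     [forall j : 'I_n.+1, (j < i)%N ==> (`|diff_after x j| < k%:Z)]].

(* probability of a theta-aligned report sequence of the first n agents
   (before any cascade, reports are i.i.d. with P(x = theta) = q) *)
Definition seq_prob (q : R) (n : nat) (x : n.-tuple bool) : R :=
  \prod_(j < n) (if tnth x j then q else 1 - q).

Definition correct_cascade_prob_upto (q : R) (k n : nat) : R :=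
  \sum_(x : n.-tuple bool | correct_cascade_by k x) seq_prob q x.

(* Probability of a correct cascade (conditionally on theta; by symmetry
   this is also the unconditional probability under the uniform prior). *)
Definition correct_cascade_prob (P : probability R R) (p : R) : R :=
  limn (fun n : nat => correct_cascade_prob_upto (q_report P p)
          `|cascade_threshold p (u_bar P)|%N n : R).

End Model.

(* Main.v *)
Require Import Defs.
From HB Require Import structures.
From mathcomp Require Import all_boot all_order all_algebra.
From mathcomp Require Import all_classical all_reals all_analysis.
From mathcomp Require Import zify ring lra.
Import Order.TTheory GRing.Theory Num.Theory.
Import numFieldNormedType.Exports.
Local Open Scope ring_scope.

Section Comb.
Variable R : realType.

Definition cc (k : nat) (d : int) {n} (x : n.-tuple bool) : bool :=
  [exists i : 'I_n.+1, (d + diff_after x i == k%:Z) &&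
     [forall j : 'I_n.+1, (j < i)%N ==> (`|d + diff_after x j| < k%:Z)]].

Lemma diff_after0 n (x : n.-tuple bool) : diff_after x 0 = 0.
Proof. by rewrite /diff_after big1. Qed.

Lemma diff_after_cons n b (t : n.-tuple bool) i :
  diff_after [tuple of b :: t] i.+1 = (if b then 1 else -1) + diff_after t i.
Proof.
rewrite /diff_after big_mkcond big_ord_recl /= tnth0; congr (_ + _).
rewrite [RHS]big_mkcond; apply: eq_bigr => j _.
by rewrite tnthS /bump /= add1n ltnS.
Qed.

Lemma cc_cons k d n b (t : n.-tuple bool) : `|d| < k%:Z ->
  cc k d [tuple of b :: t] = cc k (d + (if b then 1 else -1)) t.
Proof.
move=> hd; apply/existsP/existsP.
- case=> -[[|i] Hi] /= /andP[/eqP Hk /forallP Hj].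
    by move: Hk hd; rewrite diff_after0 addr0 => ->; lia.
  exists (Ordinal (Hi : (i < n.+1)%N)); apply/andP; split.
    by rewrite /= -addrA -diff_after_cons Hk.
  apply/forallP => -[j Hj'] /=; apply/implyP => ji.
  have := implyP (Hj (Ordinal (Hj' : (j.+1 < n.+2)%N))); rewrite /= ltnS.
  by rewrite diff_after_cons addrA; apply.
- case=> -[i Hi] /= /andP[/eqP Hk /forallP Hj].
  exists (Ordinal (Hi : (i.+1 < n.+2)%N)); apply/andP; split.
    by rewrite /= diff_after_cons addrA Hk.
  apply/forallP => -[[|j] Hj'] /=.
    by rewrite diff_after0 addr0.
  apply/implyP => ji; rewrite diff_after_cons addrA.
  exact: (implyP (Hj (Ordinal (Hj' : (j < n.+1)%N))) ji).
Qed.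

Lemma sum_tuple_split n (f : n.+1.-tuple bool -> R) :
  \sum_(x : n.+1.-tuple bool) f x =
  \sum_(t : n.-tuple bool) f [tuple of true :: t] +
  \sum_(t : n.-tuple bool) f [tuple of false :: t].
Proof.
rewrite (reindex (fun p : bool * n.-tuple bool => [tuple of p.1 :: p.2])) /=.
  rewrite -(pair_big xpredT xpredT (fun (b : bool) (t : n.-tuple bool) => f [tuple of b :: t])) /=.
  by rewrite big_bool.
exists (fun x : n.+1.-tuple bool => (thead x, [tuple of behead x])).
  move=> [b t] _ /=; rewrite theadE; congr (_, _); apply: val_inj => //.
move=> x _ /=; apply: val_inj => /=; by case: x => -[|b s] //=.
Qed.

Variable q : R.

Lemma seq_prob_cons n b (t : n.-tuple bool) :
  seq_prob q [tuple of b :: t] = (if b then q else 1 - q) * seq_prob q t.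
Proof.
rewrite /seq_prob big_ord_recl tnth0; congr (_ * _).
by apply: eq_bigr => j _; rewrite tnthS.
Qed.

Definition Fs k d n := \sum_(x : n.-tuple bool | cc k d x) seq_prob q x.

Lemma Fs_rec k d n : `|d| < k%:Z ->
  Fs k d n.+1 = q * Fs k (d + 1) n + (1 - q) * Fs k (d - 1) n.
Proof.
move=> hd; rewrite /Fs big_mkcond sum_tuple_split !mulr_sumr.
congr (_ + _); rewrite [RHS]big_mkcond; apply: eq_bigr => t _;
  rewrite cc_cons // seq_prob_cons /=; case: ifP => _; rewrite ?mulr0 //.
Qed.

Lemma total n : \sum_(x : n.-tuple bool) seq_prob q x = 1.
Proof.
elim: n => [|n IH].
  rewrite (eq_bigr (fun _ => 1)); last by move=> x _; rewrite /seq_prob big_ord0.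
  by rewrite sumr_const card_tuple.
rewrite sum_tuple_split.
under eq_bigr do rewrite seq_prob_cons.
under [X in _ + X]eq_bigr do rewrite seq_prob_cons.
by rewrite /= -!mulr_sumr IH !mulr1 addrC subrK.
Qed.

Lemma Fs_top k n : Fs k k n = 1.
Proof.
rewrite /Fs -(total n); apply: eq_bigl => x; apply/existsP.
exists ord0; rewrite /= diff_after0 addr0 eqxx /=.
by apply/forallP => j.
Qed.

Lemma Fs_bot k n : (0 < k)%N -> Fs k (- k%:Z) n = 0.
Proof.
move=> k0; rewrite /Fs big_pred0 // => x; apply/negbTE/existsP.
case=> -[[|i] Hi] /= /andP[/eqP Hk /forallP Hj].
  by move: Hk; rewrite diff_after0 addr0 => /eqP; rewrite -subr_eq0 -opprD oppr_eq0; lia.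
have := implyP (Hj ord0) isT; rewrite /= diff_after0 addr0 normrN.
by rewrite ltxx.
Qed.

Lemma Fs_0 k d : `|d| < k%:Z -> Fs k d 0 = 0.
Proof.
move=> hd; rewrite /Fs big_pred0 // => x; apply/negbTE/existsP.
case=> -[[|i] Hi] //= /andP[/eqP Hk _].
by move: Hk hd; rewrite diff_after0 addr0 => ->; lia.
Qed.

Lemma Fs_ge0 k d n : 0 <= q <= 1 -> 0 <= Fs k d n.
Proof.
move=> /andP[q0 q1]; apply: sumr_ge0 => x _; apply: prodr_ge0 => j _.
by case: ifP => _; lra.
Qed.

End Comb.
Arguments Fs {R}.

Section Lim.
Variables (R : realType) (q : R) (k : nat).
Hypothesis hq0 : 0 <= q.
Hypothesis hq1 : q <= 1.
Hypothesis hk : (0 < k)%N.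

Definition G n j := Fs q k (j%:Z - k%:Z) n.

Lemma G_bot n : G n 0 = 0.
Proof. by rewrite /G sub0r Fs_bot. Qed.

Lemma G_top n : G n (k + k) = 1.
Proof. by rewrite /G PoszD addrK Fs_top. Qed.

Lemma G_rec n j : (j.+1 < k + k)%N ->
  G n.+1 j.+1 = q * G n j.+2 + (1 - q) * G n j.
Proof.
move=> hj; rewrite /G Fs_rec; last by lia.
by congr (_ * Fs _ _ _ _ + _ * Fs _ _ _ _); lia.
Qed.

Lemma G_0 j : (0 < j < k + k)%N -> G 0 j = 0.
Proof. by move=> hj; rewrite /G Fs_0 //; lia. Qed.

Lemma G_ge0 n j : 0 <= G n j.
Proof. by apply: Fs_ge0; rewrite hq0 hq1. Qed.

Lemma G_le1 n j : (j <= k + k)%N -> G n j <= 1.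
Proof.
elim: n j => [|n IH] j hj.
  case: j hj => [|j] hj; first by rewrite G_bot ler01.
  have [->|hj'] := eqVneq j.+1 (k + k); first by rewrite G_top.
  by rewrite G_0 ?ler01 //; lia.
case: j hj => [|j] hj; first by rewrite G_bot ler01.
have [->|hj'] := eqVneq j.+1 (k + k); first by rewrite G_top.
rewrite G_rec; last by lia.
have h1 := IH j.+2 ltac:(lia); have h2 := IH j ltac:(lia).
have e1 : 0 <= q * (1 - G n j.+2) by apply: mulr_ge0; move: hq0; lra.
have e2 : 0 <= (1 - q) * (1 - G n j) by apply: mulr_ge0; move: hq1; lra.
lra.
Qed.

Lemma G_mono n j : (j <= k + k)%N -> G n j <= G n.+1 j.
Proof.
elim: n j => [|n IH] j hj.
  case: j hj => [|j] hj; first by rewrite !G_bot.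
  have [->|hj'] := eqVneq j.+1 (k + k); first by rewrite !G_top.
  by rewrite G_0 ?G_ge0 //; lia.
case: j hj => [|j] hj; first by rewrite !G_bot.
have [->|hj'] := eqVneq j.+1 (k + k); first by rewrite !G_top.
rewrite (G_rec n.+1); last by lia.
rewrite G_rec; last by lia.
have h1 := IH j.+2 ltac:(lia); have h2 := IH j ltac:(lia).
have e1 : 0 <= q * (G n.+1 j.+2 - G n j.+2) by apply: mulr_ge0; move: hq0; lra.
have e2 : 0 <= (1 - q) * (G n.+1 j - G n j) by apply: mulr_ge0; move: hq1; lra.
lra.
Qed.

Definition L j := limn (fun n => G n j).

Lemma G_cvg j : (j <= k + k)%N -> ((fun n => G n j) @ \oo --> L j)%classic.
Proof.
move=> hj; apply: nondecreasing_is_cvgn.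
  by apply/nondecreasing_seqP => n; apply: G_mono.
by exists 1 => _ [n _ <-]; apply: G_le1.
Qed.

Lemma L_bot : L 0 = 0.
Proof.
rewrite /L (_ : (fun n => G n 0) = fun _ => 0); last by apply: funext => n; rewrite G_bot.
by rewrite lim_cst.
Qed.

Lemma L_top : L (k + k) = 1.
Proof.
rewrite /L (_ : (fun n => G n (k + k)) = fun _ => 1); last by apply: funext => n; rewrite G_top.
by rewrite lim_cst.
Qed.

Lemma L_rec j : (j.+1 < k + k)%N -> L j.+1 = q * L j.+2 + (1 - q) * L j.
Proof.
move=> hj; apply: cvg_lim => //.
rewrite -cvg_shiftS /=.
rewrite (_ : (fun n => G n.+1 j.+1) = (fun n => q * G n j.+2 + (1 - q) * G n j)); last first.
  by apply: funext => n; rewrite G_rec.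
apply: cvgD; apply: cvgMr; apply: G_cvg; lia.
Qed.

End Lim.
Arguments L {R}.
Arguments G {R}.

Section Harm.
Variable R : realType.

Lemma harm_unique (q : R) (N : nat) (D : nat -> R) : 0 < q -> q <= 1 -> (0 < N)%N ->
  D 0 = 0 -> D N = 0 ->
  (forall j, (j.+1 < N)%N -> D j.+1 = q * D j.+2 + (1 - q) * D j) ->
  forall j, (j <= N)%N -> D j = 0.
Proof.
move=> q0 q1 N0 D0 DN Drec.
have qne0 : q != 0 by rewrite gt_eqF.
pose s := (1 - q) / q.
have s0 : 0 <= s by rewrite /s divr_ge0 //; [lra | exact: ltW].
have C1 : forall j, (j.+1 <= N)%N -> D j.+1 - D j = s ^+ j * D 1.
  elim=> [|j IH] hj; first by rewrite D0 subr0 expr0 mul1r.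
  have H := Drec j hj.
  have E : q * (D j.+2 - D j.+1) = (1 - q) * (D j.+1 - D j) by lra.
  rewrite exprS -mulrA -IH; last exact: ltnW.
  by apply: (mulfI qne0); rewrite E /s; field.
have C2 : forall j, (j <= N)%N -> D j = D 1 * \sum_(i < j) s ^+ i.
  elim=> [|j IH] hj; first by rewrite D0 big_ord0 mulr0.
  rewrite big_ord_recr /= mulrDr -IH; last exact: ltnW.
  by rewrite [D 1 * _]mulrC -C1 // addrC subrK.
have S1 : 1 <= \sum_(i < N) s ^+ i.
  case: N N0 {DN Drec C1 C2} => // N _.
  rewrite big_ord_recl expr0 lerDl; apply: sumr_ge0 => i _.
  exact: exprn_ge0.
have D1 : D 1 = 0.
  move: DN; rewrite C2 // => /eqP; rewrite mulf_eq0 => /orP[/eqP //|/eqP h].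
  by move: S1; rewrite h ler10.
by move=> j hj; rewrite C2 // D1 mul0r.
Qed.

End Harm.

Lemma L_mid (R : realType) (q : R) (k : nat) : 1/2 < q -> q < 1 -> (0 < k)%N ->
  L q k k = (1 + ((1 - q) / q) ^+ k)^-1.
Proof.
move=> q12 q1 k0.
have q0 : 0 < q by lra.
have qne0 : q != 0 by rewrite gt_eqF.
set s := (1 - q) / q.
have s0 : 0 <= s by rewrite /s divr_ge0 //; [lra | exact: ltW].
have s1 : s < 1 by rewrite /s ltr_pdivrMr //; lra.
have sk1 : s ^+ k < 1 by rewrite exprn_ilt1 // -lt0n.
have skk : s ^+ (k + k) = s ^+ k * s ^+ k by rewrite exprD.
have W0 : 1 - s ^+ (k + k) != 0.
  rewrite skk; apply/eqP => hh; have := exprn_ge0 k s0; nra.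
pose h j := (1 - s ^+ j) / (1 - s ^+ (k + k)).
have hharm : forall (W t : R), W != 0 ->
    (1 - s * t) / W = q * ((1 - s * (s * t)) / W) + (1 - q) * ((1 - t) / W).
  by move=> W t hW; rewrite /s; field; rewrite hW qne0.
have HD := @harm_unique R q (k + k) (fun j => L q k j - h j) q0 (ltW q1)
  ltac:(lia).
have D0 : L q k 0 - h 0 = 0.
  by rewrite L_bot // /h expr0 subrr mul0r subrr.
have DN : L q k (k + k) - h (k + k) = 0.
  by rewrite L_top // /h divff // subrr.
have Drec : forall j, (j.+1 < k + k)%N -> L q k j.+1 - h j.+1 =
     q * (L q k j.+2 - h j.+2) + (1 - q) * (L q k j - h j).
  move=> j hj; rewrite (L_rec R q k (ltW q0) (ltW q1) k0 j hj) /h !exprS.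
  rewrite (hharm _ _ W0); ring.
have := HD D0 DN Drec k ltac:(lia).
rewrite /h => /eqP; rewrite subr_eq0 => /eqP ->.
rewrite skk; field.
apply/andP; split; apply/negP => /eqP; have := exprn_ge0 k s0; lra.
Qed.

Section Integ.
Variable R : realType.

Lemma flip_prob_gt0 (e : R) : 0 < flip_prob e.
Proof. by rewrite /flip_prob invr_gt0 ltr_wpDr // expR_ge0. Qed.

Lemma flip_prob_lt1 (e : R) : flip_prob e < 1.
Proof. by rewrite /flip_prob invf_lt1 ?ltrDl ?expR_gt0 // ltr_wpDr // expR_ge0. Qed.

Lemma flip_prob_cont : continuous (@flip_prob R).
Proof.
move=> x; rewrite /flip_prob; apply: (@continuousV _ _ (fun y : R => 1 + expR y)).
  by rewrite gt_eqF // ltr_wpDr // expR_ge0.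
apply: continuousD; first exact: cst_continuous.
exact: continuous_expR.
Qed.

Lemma flip_prob_mf : measurable_fun setT (@flip_prob R).
Proof. exact: measurable_realfun.continuous_measurable_fun flip_prob_cont. Qed.

Lemma flip_int (P : probability R R) : P.-integrable setT (fun e => (flip_prob e)%:E).
Proof.
apply: (@le_integrable _ _ _ _ _ _ _ (EFin \o cst 1)) => //.
- by apply/measurable_realfun.measurable_EFinP; exact: flip_prob_mf.
- move=> x _ /=; rewrite lee_fin normr1 ger0_norm; [exact: ltW (flip_prob_lt1 x)|exact: ltW (flip_prob_gt0 x)].
- exact: finite_measure_integrable_cst.
Qed.

Lemma q_report_eq (P : probability R R) (p : R) :
  q_report P p = p + (1 - 2 * p) * u_bar P.
Proof.
rewrite /q_report /u_bar.
rewrite (eq_integral (fun e => (cst p%:E) e + ((1 - 2 * p)%:E * (flip_prob e)%:E))%E); last first.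
  by move=> e _; rewrite /report_correct_given /= -EFinM -EFinD; congr (_%:E); ring.
rewrite integralD //; last first.
  by apply: integrableZl => //; exact: flip_int.
  exact: finite_measure_integrable_cst.
rewrite integralZl //; last exact: flip_int.
rewrite integral_cst // [X in (p%:E * X)%E](_ : _ = 1%E) ?mule1; last exact: probability_setT.
have := integrable_fin_num measurableT (flip_int P).
move: (\int[P]_x (flip_prob x)%:E)%E => I.
by case: I => //= r _.
Qed.

End Integ.

Section Thr.
Variable R : realType.
Variable p : R.
Hypothesis p12 : 1/2 < p.
Hypothesis p1 : p < 1.

Let a := (1 - p) / p.
Let V (r : R) := (r - a) / ((1 + r) * (1 - a)).

Lemma a_gt0 : 0 < a.
Proof. by rewrite /a divr_gt0 //; move: p12 p1; lra. Qed.

Lemma a_lt1 : a < 1.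
Proof. by rewrite /a ltr_pdivrMr; move: p12 p1; lra. Qed.

Lemma vt_eq (m : nat) : (2 <= m)%N ->
  v_tilde p m = V (a `^ (1 / (m%:R - 1))).
Proof.
move=> m2.
have m1 : 1 < (m%:R : R) by rewrite ltr1n.
rewrite /v_tilde /= -/a.
set x := 1 / (m%:R - 1).
have -> : ((m%:R : R) - 2) / (m%:R - 1) = 1 - x.
  by rewrite /x; field; move: m1; rewrite subr_eq0; apply: contraTneq => ->; rewrite ltxx.
rewrite powRB; last by apply/implyP => _; rewrite gt_eqF // a_gt0.
rewrite powRr1; last exact: ltW a_gt0.
rewrite powRN.
set r := a `^ x.
have r0 : 0 < r by rewrite powR_gt0 // a_gt0.
have a0 := a_gt0; have a1 := a_lt1.
have p12' := p12; have p1' := p1.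
have rne0 : r != 0 by rewrite gt_eqF.
have -> : 1 - a / r + r^-1 - a = (1 + r) * (1 - a) / r by field.
have -> : 1 - a / r = (r - a) / r by field.
rewrite /V; field; apply/andP; split.
  by rewrite gt_eqF //; lra.
by rewrite gt_eqF //; lra.
Qed.

Lemma key (u r : R) : 0 < r -> 0 < u * (1 - p) + p * (1 - u) ->
  (r <= rho_bar p u) = (V r <= u) /\ (rho_bar p u < r) = (u < V r).
Proof.
move=> r0 Q0; set Q := u * (1 - p) + p * (1 - u).
have a0 := a_gt0; have a1 := a_lt1.
have p12' := p12; have p1' := p1.
have -> : rho_bar p u = (1 - Q) / Q by rewrite /rho_bar /Q; congr (_ / _); ring.
have D0 : 0 < (1 + r) * (1 - a) by apply: mulr_gt0; lra.
have p0 : 0 < p by move: p12; lra.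
have E : 1 - Q - r * Q = p * (u * ((1 + r) * (1 - a)) - (r - a)).
  by rewrite /Q /a; field; rewrite gt_eqF.
split.
  rewrite ler_pdivlMr // /V ler_pdivrMr //.
  by rewrite -subr_ge0 (_ : 1 - Q - r * Q = 1 - Q - r * Q) // E pmulr_rge0 // subr_ge0.
rewrite ltr_pdivrMr // /V ltr_pdivlMr //.
rewrite -subr_gt0 -[X in _ = X]subr_gt0.
have -> : r * Q - (1 - Q) = - (1 - Q - r * Q) by ring.
by rewrite E -mulrN pmulr_rgt0 // opprB.
Qed.

Lemma part1 (k : nat) (u : R) : (2 <= k)%N ->
  v_tilde p k <= u < v_tilde p k.+1 ->
  [/\ u < 1/2, 0 < rho_bar p u & cascade_threshold p u = k%:Z].
Proof.
move=> k2 /andP[hu1 hu2].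
have a0 := a_gt0; have a1 := a_lt1.
have p12' := p12; have p1' := p1.
rewrite vt_eq // in hu1; rewrite vt_eq // in hu2.
move: hu2; rewrite -natr1 addrK => hu2.
set r1 := a `^ (1 / (k%:R - 1)) in hu1.
set r2 := a `^ (1 / k%:R) in hu2.
have r10 : 0 < r1 by rewrite powR_gt0.
have r20 : 0 < r2 by rewrite powR_gt0.
have k0 : 0 < (k%:R : R) by rewrite ltr0n; lia.
have km0 : 0 < (k%:R : R) - 1 by rewrite subr_gt0 ltr1n.
have la0 : ln a < 0 by rewrite ln_lt0 // a0 a1.
have lr1 : ln r1 = ln a / (k%:R - 1) by rewrite /r1 ln_powR mul1r mulrC.
have lr2 : ln r2 = ln a / k%:R by rewrite /r2 ln_powR mul1r mulrC.
have r21 : r2 < 1.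
  rewrite -(ltr_ln (x:=r2) (y:=1)) ?posrE // ln1 lr2.
  by rewrite ltr_pdivrMr // mul0r.
have D0 : 0 < (1 + r2) * (1 - a) by apply: mulr_gt0; lra.
have uh : u < 1/2.
  apply: (lt_trans hu2); rewrite /V ltr_pdivrMr //.
  have : 0 < (1 - r2) * (1 + a) by apply: mulr_gt0; lra.
  lra.
have Q0 : 0 < u * (1 - p) + p * (1 - u) by nra.
have [k1 _] := @key u r1 r10 Q0.
have [_ k2'] := @key u r2 r20 Q0.
have rho1 : r1 <= rho_bar p u by rewrite k1.
have rho2 : rho_bar p u < r2 by rewrite k2'.
have rho0 : 0 < rho_bar p u by apply: lt_le_trans rho1.
split => //.
have lrho1 : ln r1 <= ln (rho_bar p u).
  by rewrite leNgt ltr_ln ?posrE // -leNgt.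
have lrho2 : ln (rho_bar p u) < ln r2 by rewrite ltr_ln ?posrE.
have lrho0 : ln (rho_bar p u) < 0.
  by apply: (lt_trans lrho2); rewrite lr2 ltr_pdivrMr // mul0r.
rewrite /cascade_threshold -/a.
rewrite (@floor_def _ _ (k%:Z - 1)); first by rewrite subrK.
rewrite subrK intrB.
apply/andP; split.
  rewrite ler_ndivlMr //; move: lrho1; rewrite lr1 ler_pdivrMr //.
  by rewrite mulrC.
rewrite ltr_ndivrMr //; move: lrho2; rewrite lr2 ltr_pdivlMr //.
by rewrite mulrC.
lia.
Qed.

End Thr.

Lemma ccp_eq (R : realType) (P : probability R R) (p : R) (k : nat) :
  cascade_threshold p (u_bar P) = k%:Z ->
  correct_cascade_prob P p = L (q_report P p) k k.
Proof.
move=> hthr; rewrite /correct_cascade_prob hthr /=.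
rewrite /L.
suff -> : (fun n : nat => correct_cascade_prob_upto (q_report P p) k n) =
  (fun n => G (q_report P p) k n k) by [].
apply: funext => n.
rewrite /correct_cascade_prob_upto /G subrr /Fs; apply: eq_bigl => x.
rewrite /cc; apply: eq_existsb => i; rewrite add0r; congr andb.
by apply: eq_forallb => j; rewrite add0r.
Qed.

Theorem theorem3 (R : realType) (p : R) (k : nat) :
  1 / 2 < p -> p < 1 -> (2 <= k)%N ->
  (forall P : probability R R,
      v_tilde p k <= u_bar P < v_tilde p k.+1 ->
      cascade_threshold p (u_bar P) = k%:Z) /\
  (forall P1 P2 : probability R R,
      v_tilde p k <= u_bar P1 < v_tilde p k.+1 ->
      v_tilde p k <= u_bar P2 < v_tilde p k.+1 ->
      u_bar P1 < u_bar P2 ->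
      correct_cascade_prob P2 p < correct_cascade_prob P1 p).
Proof.
move=> p12 p1 k2.
split.
  by move=> P h; case: (@part1 R p p12 p1 k (u_bar P) k2 h).
move=> P1 P2 h1 h2 u12.
have [uh1 rho1 thr1] := @part1 R p p12 p1 k (u_bar P1) k2 h1.
have [uh2 rho2 thr2] := @part1 R p p12 p1 k (u_bar P2) k2 h2.
rewrite (ccp_eq _ _ _ _ thr1) (ccp_eq _ _ _ _ thr2).
have k0 : (0 < k)%N by lia.
set q1 := q_report P1 p; set q2 := q_report P2 p.
have E1 : q1 = p + (1 - 2 * p) * u_bar P1 by rewrite /q1 /q2 q_report_eq.
have E2 : q2 = p + (1 - 2 * p) * u_bar P2 by rewrite /q1 /q2 q_report_eq.
have R1 : rho_bar p (u_bar P1) = (1 - q1) / q1.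
  by rewrite E1 /rho_bar; congr (_ / _); ring.
have R2 : rho_bar p (u_bar P2) = (1 - q2) / q2.
  by rewrite E2 /rho_bar; congr (_ / _); ring.
have q1h : 1/2 < q1 by rewrite E1; nra.
have q2h : 1/2 < q2 by rewrite E2; nra.
have q10 : 0 < q1 by lra.
have q20 : 0 < q2 by lra.
have q11 : q1 < 1.
  have : 0 < (1 - q1) / q1 * q1 by rewrite -R1 mulr_gt0.
  by rewrite divfK ?gt_eqF //; lra.
have q21 : q2 < 1.
  have : 0 < (1 - q2) / q2 * q2 by rewrite -R2 mulr_gt0.
  by rewrite divfK ?gt_eqF //; lra.
rewrite (L_mid _ _ _ q1h q11 k0) (L_mid _ _ _ q2h q21 k0).
have q12 : q2 < q1 by rewrite E1 E2; nra.
set s1 := (1 - q1) / q1; set s2 := (1 - q2) / q2.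
have s10 : 0 <= s1 by rewrite /s1 divr_ge0 //; lra.
have s12 : s1 < s2.
  rewrite /s1 /s2 ltr_pdivrMr // mulrAC ltr_pdivlMr //; nra.
have sk : s1 ^+ k < s2 ^+ k by rewrite ltrXn2r // -lt0n.
have sk0 := exprn_ge0 k s10.
rewrite ltf_pV2 ?posrE; last 2 first.
- lra.
- lra.
lra.
Qed.
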